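(* Let $a\ge2$, $d\ge1$ and $s$ be integers with $\gcd(a,d)=1$ and $1\le s<a$, and put $b=a+sd$. Let $\mathit{NR}$ be the set of positive integers not representable as $\sum_{i=0}^s(a+id)x_i$ with $x_0,\dots,x_s$ nonnegative integers, and let $S_m=\sum_{n\in\mathit{NR}}n^m$. Then, as an identity of functions (equivalently of power series about $z=0$), \[ \sum_{m=0}^\infty S_m\frac{z^m}{m!}=\frac{e^{\lceil\frac{b-1}{s}\rceil az}-1}{(e^{dz}-1)(e^{az}-1)}+\frac{e^{\lceil\frac{a-1}{s}\rceil bz}-1}{(e^{-dz}-1)(e^{bz}-1)}-\frac{1}{e^z-1}. \]
   Context: $\lceil x\rceil$ is the least integer not less than $x$. *)

(* Defs.v *)
From HB Require Import structures.
From mathcomp Require Import all_boot all_order all_algebra.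
From mathcomp Require Import all_classical all_reals all_analysis.
Set Implicit Arguments. Unset Strict Implicit. Unset Printing Implicit Defensive.
Import Order.TTheory GRing.Theory Num.Theory.
Import numFieldNormedType.Exports.
Local Open Scope classical_set_scope.
Local Open Scope ring_scope.

Definition representable (a d s n : nat) : Prop :=
  exists x : nat -> nat, n = (\sum_(i < s.+1) (a + i * d) * x i)%N.

Definition NR (a d s : nat) : set nat :=
  [set n | (0 < n)%N /\ ~ representable a d s n].

Definition Spow (R : realType) (a d s m : nat) : R :=
  \sum_(n \in NR a d s) (n%:R : R) ^+ m.

(* Main.v *)
Set Warnings "-all".
Require Import Defs.
From HB Require Import structures.
From mathcomp Require Import all_boot all_order all_algebra.
From mathcomp Require Import all_classical all_reals all_analysis.
From mathcomp Require Import zify ring lra.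
Import Order.TTheory GRing.Theory Num.Theory.
Import numFieldNormedType.Exports.
Local Open Scope classical_set_scope.
Local Open Scope ring_scope.

Section Comb.
Variables a d s : nat.
Hypotheses (ha : (0 < a)%N) (hs : (0 < s)%N).

Definition qc j := ((j + s.-1) %/ s)%N.
Definition w j := (qc j * a + j * d)%N.

Lemma qc_le j : (j <= qc j * s)%N.
Proof.
have := ltn_ceil (j + s.-1) hs; rewrite /qc mulSn; lia.
Qed.

Lemma qc_min j k : (j <= k * s)%N -> (qc j <= k)%N.
Proof.
move=> h; rewrite /qc -ltnS ltn_divLR // mulSn; lia.
Qed.

Lemma qc_self j : (qc j <= j)%N.
Proof. apply: qc_min; rewrite leq_pmulr //. Qed.

Lemma qcS j : (qc j.+1 = qc j /\ (j.+1 <= qc j * s)%N) \/ (qc j.+1 = (qc j).+1 /\ j = (qc j * s)%N).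
Proof.
have h1 := qc_le j; have h2 := qc_le j.+1.
case: (ltnP j (qc j * s)) => h.
  left; split => //; apply/eqP; rewrite eqn_leq qc_min //=.
  by apply: qc_min; apply: leq_trans h2.
have e : j = (qc j * s)%N by apply/eqP; rewrite eqn_leq h1 h.
right; split => //; apply/eqP; rewrite eqn_leq qc_min ?mulSn //=; last by lia.
rewrite ltnNge; apply/negP => h3.
have := leq_mul h3 (leqnn s); lia.
Qed.

Lemma rep_add n i : (i <= s)%N -> representable a d s n ->
  representable a d s (n + (a + i * d))%N.
Proof.
move=> his [x ->]; exists (fun l => x l + (l == i :> nat))%N.
under [X in _ = X]eq_bigr do rewrite mulnDr.
rewrite big_split /=; congr (_ + _)%N.
have hi : (i < s.+1)%N by [].
rewrite (bigD1 (Ordinal hi)) //= eqxx muln1 big1 ?addn0 // => l hl.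
suff -> : (nat_of_ord l == i) = false by rewrite muln0.
apply/negP => /eqP e; move: hl; rewrite -val_eqE /= e eqxx //.
Qed.

Lemma rep_build k e : (e <= k * s)%N -> representable a d s (k * a + e * d)%N.
Proof.
elim: k e => [|k IH] e he.
  have -> : e = 0%N by move: he; rewrite mul0n; lia.
  by exists (fun _ => 0%N); rewrite big1 // => i _; rewrite muln0.
set i := minn e s.
have h1 : (e - i <= k * s)%N by move: he; rewrite mulSn /i; lia.
have := @rep_add _ i (geq_minr e s) (IH _ h1).
have -> : (k * a + (e - i) * d + (a + i * d) = k.+1 * a + e * d)%N; last by [].
have hie : (i <= e)%N by rewrite /i geq_minl.
rewrite mulSn mulnBl; have := leq_mul hie (leqnn d); lia.
Qed.

Lemma rep_decomp n : representable a d s n ->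
  exists k e, (e <= k * s)%N /\ n = (k * a + e * d)%N.
Proof.
move=> [x ->]; exists (\sum_(i < s.+1) x i)%N, (\sum_(i < s.+1) i * x i)%N; split.
  rewrite big_distrl /=; apply: leq_sum => i _.
  by rewrite mulnC leq_mul2l -ltnS ltn_ord orbT.
rewrite !big_distrl -big_split /=; apply: eq_bigr => i _.
rewrite mulnDl; lia.
Qed.

Definition sb n := [exists j : 'I_a, (j * d == n %[mod a])%N && (w j <= n)%N].

Lemma repP n : representable a d s n <-> sb n.
Proof.
split.
  move/rep_decomp=> [k [e [he ->]]]; apply/existsP.
  exists (Ordinal (ltn_pmod e ha)) => /=; apply/andP; split.
    by rewrite modnMml modnMDl.
  rewrite /w leq_add //; last by rewrite leq_mul2r leq_mod orbT.
  rewrite leq_mul2r qc_min ?orbT //; apply: leq_trans he; exact: leq_mod.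
move/existsP=> [j /andP [hj hw]].
have : (a %| n - w j)%N.
  by rewrite -eqn_mod_dvd // /w modnMDl eq_sym.
move/dvdnP=> [t ht].
have -> : n = ((qc j + t) * a + j * d)%N by rewrite mulnDl; move: ht hw; rewrite /w; lia.
apply: rep_build; apply: leq_trans (qc_le j) _; rewrite leq_mul2r leq_addr orbT //.
Qed.

End Comb.

Section Cop.
Variables a d s : nat.
Hypotheses (ha : (0 < a)%N) (hs : (0 < s)%N) (hcop : coprime a d).

Lemma res_inj j j' : (j < a)%N -> (j' < a)%N -> (j * d == j' * d %[mod a])%N -> j = j'.
Proof.
wlog le : j j' / (j' <= j)%N.
  move=> H hj hj' e; case: (leqP j' j) => h; first exact: H.
  by apply/esym/H => //; [exact: ltnW| rewrite eq_sym].
move=> hj hj'; rewrite eqn_mod_dvd ?leq_mul2r ?le ?orbT // -mulnBl Gauss_dvdl //.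
case: (posnP (j - j')) => [|h]; first by lia.
move/(dvdn_leq h); lia.
Qed.

Lemma res_ex n : exists j : 'I_a, (j * d == n %[mod a])%N.
Proof.
pose f (j : 'I_a) : 'I_a := Ordinal (ltn_pmod (j * d) ha).
have finj : injective f.
  move=> j j' /(congr1 val) /= e; apply/val_inj/res_inj; [exact: ltn_ord|exact: ltn_ord|exact/eqP].
have [g fg gf] := injF_bij finj.
exists (g (Ordinal (ltn_pmod n ha))).
have := congr1 val (gf (Ordinal (ltn_pmod n ha))); rewrite /= => ->.
by [].
Qed.

Lemma sb_unique n (j : 'I_a) : (j * d == n %[mod a])%N -> sb a d s n = (w a d s j <= n)%N.
Proof.
move=> hj; apply/existsP/idP => [[j' /andP [hj' hw]]|hw]; last by exists j; rewrite hj.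
have -> : j = j' by apply/val_inj/res_inj; [exact: ltn_ord|exact: ltn_ord| rewrite (eqP hj) (eqP hj')].
done.
Qed.

Lemma w_lt j : (j < a)%N -> (w a d s j < a * (a + d))%N.
Proof.
move=> hj; rewrite /w; have := @qc_self a s ha hs j.
move=> h; have h1 := leq_mul h (leqnn a); have h2 := leq_mul (ltnW hj) (leqnn d).
have h3 : (j * a < a * a)%N by rewrite mulnC ltn_pmul2l.
rewrite mulnDr; lia.
Qed.

Lemma sb_big n : (a * (a + d) <= n)%N -> sb a d s n.
Proof.
move=> hn; have [j hj] := res_ex n; rewrite (@sb_unique _ _ hj).
by apply: ltnW; apply: leq_trans (@w_lt j (ltn_ord j)) hn.
Qed.

Lemma sb0 : sb a d s 0.
Proof.
apply/existsP; exists (Ordinal ha) => /=.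
by rewrite mod0n /w /qc divn_small ?prednK // ?ltn_predL // mul0n.
Qed.

Lemma t_eq (R : pzRingType) n :
  ((sb a d s n)%:R - ((a <= n)%N && sb a d s (n - a))%:R : R)
  = \sum_(j < a) ((n == w a d s j)%:R : R).
Proof.
have [j hj] := res_ex n.
rewrite (bigD1 j) //= big1 ?addr0; last first.
  move=> j' hj'; case: eqP => // e; exfalso; move/negP: hj'; apply.
  apply/eqP/val_inj/res_inj; [exact: ltn_ord|exact: ltn_ord|].
  by rewrite (eqP hj) e /w modnMDl.
rewrite (@sb_unique _ _ hj).
have hwm : (w a d s j == n %[mod a])%N by rewrite /w modnMDl.
case: (leqP a n) => han /=; last first.
  case: (leqP (w a d s j) n) => h; last first.
    have e : (n == w a d s j) = false by apply: negbTE; apply/eqP; lia.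
    by rewrite e subr0.
  have : (a %| n - w a d s j)%N by rewrite -eqn_mod_dvd // eq_sym.
  move/dvdnP=> [t ht]; case: t ht => [|t] ht.
    have e : n = w a d s j by lia.
    by rewrite e eqxx subr0.
  by lia.
have hj2 : (j * d == (n - a) %[mod a])%N.
  by rewrite (eqP hj) -{1}(subnK han) modnDr.
rewrite (@sb_unique _ _ hj2).
case: (leqP (w a d s j) n) => h; last first.
  have e : (n == w a d s j) = false by apply: negbTE; apply/eqP; lia.
  have e2 : (w a d s j <= n - a)%N = false by apply: negbTE; rewrite -ltnNge; lia.
  by rewrite e e2 subrr.
have : (a %| n - w a d s j)%N by rewrite -eqn_mod_dvd // eq_sym.
move/dvdnP=> [t ht]; case: t ht => [|t] ht.
  have e : n = w a d s j by lia.
  have e2 : (w a d s j <= w a d s j - a)%N = false by apply: negbTE; rewrite -ltnNge; lia.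
  by rewrite e eqxx e2 subr0.
have e : (n == w a d s j) = false by apply: negbTE; apply/eqP; lia.
have e2 : (w a d s j <= n - a)%N by lia.
by rewrite e e2 subrr.
Qed.

End Cop.

Section Sums.
Variable R : comPzRingType.

Lemma geo (x : R) m k : (1 - x) * \sum_(m <= n < m + k) x ^+ n = x ^+ m - x ^+ (m + k).
Proof.
elim: k => [|k IH]; first by rewrite addn0 big_geq // mulr0 subrr.
rewrite addnS big_nat_recr /=; last by rewrite leq_addr.
rewrite mulrDr IH exprS; ring.
Qed.

Lemma sum_pick (x : R) c L : (c < L)%N ->
  \sum_(0 <= n < L) (n == c)%:R * x ^+ n = x ^+ c.
Proof.
move=> hc; rewrite big_mkord (bigD1 (Ordinal hc)) //= eqxx mul1r big1 ?addr0 //.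
move=> i hi; have -> : (nat_of_ord i == c) = false; last by rewrite mul0r.
by apply: negbTE; apply: contra hi => /eqP e; apply/eqP/val_inj.
Qed.

Variables a d s : nat.
Hypotheses (ha : (0 < a)%N) (hs : (0 < s)%N) (hcop : coprime a d).

Lemma tele (x : R) (L : nat) : (a * (a + d) + a <= L)%N ->
  (1 - x ^+ a) * \sum_(0 <= n < L) (sb a d s n)%:R * x ^+ n =
  \sum_(j < a) x ^+ (w a d s j) - \sum_(L <= n < L + a) x ^+ n.
Proof.
move=> hL.
set A := \sum_(0 <= n < L) _.
have E2 : x ^+ a * A = \sum_(a <= m < L + a) (sb a d s (m - a))%:R * x ^+ m.
  have Hb := @big_addn _ 0 +%R 0 (L + a) a xpredT (fun m => (sb a d s (m - a))%:R * x ^+ m).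
  rewrite add0n addnK in Hb; rewrite Hb /A big_distrr /=.
  by apply: eq_bigr => i _; rewrite addnK exprD; ring.
have E3 : \sum_(0 <= m < L + a) ((a <= m)%N && sb a d s (m - a))%:R * x ^+ m
         = x ^+ a * A.
  rewrite E2 (big_cat_nat (n := a)) //= ?leq_addl //.
  rewrite [X in X + _]big_nat big1 ?add0r; last first.
    by move=> i /andP [_ hi]; rewrite leqNgt hi /= mul0r.
  by apply: eq_big_nat => i /andP [hi _]; rewrite hi.
have E4 : \sum_(0 <= m < L + a) ((a <= m)%N && sb a d s (m - a))%:R * x ^+ m
   = \sum_(0 <= m < L + a) (sb a d s m)%:R * x ^+ m -
     \sum_(0 <= m < L + a) \sum_(j < a) ((m == w a d s j)%:R * x ^+ m).
  rewrite -sumrB; apply: eq_bigr => m _.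
  rewrite -big_distrl /= -(@t_eq a d s ha hs hcop R m); ring.
have E5 : \sum_(0 <= m < L + a) (sb a d s m)%:R * x ^+ m =
   A + \sum_(L <= m < L + a) x ^+ m.
  rewrite (big_cat_nat (n := L)) //= ?leq_addr //; congr (_ + _).
  apply: eq_big_nat => i /andP [hi _].
  rewrite (@sb_big a d s ha hs hcop) ?mul1r //; lia.
have E6 : \sum_(0 <= m < L + a) \sum_(j < a) ((m == w a d s j)%:R * x ^+ m)
   = \sum_(j < a) x ^+ (w a d s j).
  rewrite exchange_big /=; apply: eq_bigr => j _.
  apply: sum_pick; have := @w_lt a d s ha hs hcop j (ltn_ord j); lia.
have : (1 - x ^+ a) * A = A - x ^+ a * A by ring.
move=> ->; rewrite -E3 E4 E5 E6; ring.
Qed.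

Lemma gaps (x : R) (L : nat) : (a * (a + d) + a <= L)%N ->
  (1 - x) * (1 - x ^+ a) * \sum_(0 <= n < L | ~~ sb a d s n) x ^+ n =
  (1 - x ^+ a) - (1 - x) * \sum_(j < a) x ^+ (w a d s j).
Proof.
move=> hL.
have EG : \sum_(0 <= n < L | ~~ sb a d s n) x ^+ n =
   \sum_(0 <= n < L) x ^+ n - \sum_(0 <= n < L) (sb a d s n)%:R * x ^+ n.
  rewrite big_mkcond /= -sumrB; apply: eq_bigr => i _.
  by case: (sb a d s i) => /=; ring.
have T := tele x L hL.
have G1 := geo x 0 L; rewrite add0n in G1.
have G2 := geo x L a.
rewrite EG.
have -> : (1 - x) * (1 - x ^+ a) *
   (\sum_(0 <= n < L) x ^+ n - \sum_(0 <= n < L) (sb a d s n)%:R * x ^+ n)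
   = (1 - x ^+ a) * ((1 - x) * \sum_(0 <= n < L) x ^+ n)
     - (1 - x) * ((1 - x ^+ a) * \sum_(0 <= n < L) (sb a d s n)%:R * x ^+ n) by ring.
rewrite T G1.
have -> : (1 - x) * (\sum_(j < a) x ^+ w a d s j - \sum_(L <= n < L + a) x ^+ n)
  = (1 - x) * \sum_(j < a) x ^+ w a d s j - (x ^+ L - x ^+ (L + a)) by rewrite -G2; ring.
rewrite exprD expr0; ring.
Qed.

Lemma qc0 : qc s 0 = 0%N.
Proof. by rewrite /qc add0n divn_small // prednK // ltn_predL. Qed.

Lemma Wsum (e f : R) n : (1 - f) * \sum_(j < n.+1) e ^+ (qc s j) * f ^+ j =
  1 - f ^+ n.+1 * e ^+ (qc s n) + f * (e - 1) * \sum_(m < qc s n) (e * f ^+ s) ^+ m.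
Proof.
elim: n => [|n IH].
  by rewrite big_ord_recr big_ord0 /= qc0 big_ord0 !expr0 expr1 add0r !mulr1 mulr0 addr0.
rewrite big_ord_recr /= mulrDr IH.
have [[h1 _]|[h1 h2]] := @qcS a s ha hs n.
  rewrite h1 [f ^+ n.+2]exprS; ring.
rewrite h1 big_ord_recr /=.
have hg : (e * f ^+ s) ^+ qc s n = e ^+ qc s n * f ^+ n.
  by rewrite exprMn -exprM mulnC -h2.
rewrite hg !exprS; ring.
Qed.

End Sums.

Lemma ceil_nat (R : realType) (m s : nat) : (0 < s)%N ->
  Num.ceil (m%:R / s%:R : R) = (qc s m)%:Z.
Proof.
move=> hs; have hs' : (0 : R) < s%:R by rewrite ltr0n.
have h1 := ltn_ceil (m + s.-1) hs; have h2 := leq_trunc_div (m + s.-1) s.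
rewrite /qc; apply: ceil_def; apply/andP; split.
  rewrite raddfB /= ltr_pdivlMr // mulrBl mul1r -natrM ltrBlDr -natrD ltr_nat.
  move: h1 h2; rewrite mulSn; lia.
rewrite ler_pdivrMr // -natrM ler_nat; move: h1; rewrite mulSn; lia.
Qed.

Lemma final_alg (F : fieldType) (x e f g G W S P Q : F) :
 x - 1 != 0 -> e - 1 != 0 -> f - 1 != 0 -> g - 1 != 0 -> f != 0 ->
 (1 - x) * (1 - e) * G = (1 - e) - (1 - x) * W ->
 (1 - f) * W = 1 - P + f * (e - 1) * S ->
 (1 - g) * S = 1 - Q ->
 G = (P - 1) / ((f - 1) * (e - 1)) + (Q - 1) / ((f^-1 - 1) * (g - 1)) - 1 / (x - 1).
Proof.
move=> hx he hf hg hf0 HG HW HS.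
have n1 : forall y : F, y - 1 != 0 -> 1 - y != 0.
  by move=> y; rewrite -opprB oppr_eq0.
have hS : S = (1 - Q) / (1 - g) by rewrite -HS mulrC mulKf // n1.
have hW : W = (1 - P + f * (e - 1) * S) / (1 - f) by rewrite -HW mulrC mulKf // n1.
have hG : G = ((1 - e) - (1 - x) * W) / ((1 - x) * (1 - e)).
  by rewrite -HG mulrC mulKf // mulf_neq0 // n1.
have hfi : f^-1 - 1 != 0.
  rewrite subr_eq0; apply/eqP => e1; move/eqP: hf; apply; rewrite -[f]invrK e1 invr1 subrr //.
rewrite hG hW hS; field.
have h1f : 1 + -1 * f != 0 by rewrite mulN1r n1.
by rewrite hx hf0 hg h1f he hf !n1.
Qed.

Lemma expR_nat_ne1 (R : realType) (z : R) k : z != 0 -> (0 < k)%N -> expR z ^+ k - 1 != 0.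
Proof.
move=> hz hk; rewrite subr_eq0 -expRM_natl; apply/eqP => e.
have : k%:R * z = 0 by apply: expR_inj; rewrite e expR0.
move/eqP; rewrite mulf_eq0 (negbTE hz) orbF pnatr_eq0; lia.
Qed.

Theorem mainTheorem4 (R : realType) (a d s : nat)
  (ha : (2 <= a)%N) (hd : (1 <= d)%N) (hcop : coprime a d)
  (hs1 : (1 <= s)%N) (hsa : (s < a)%N) (z : R) (hz : z != 0) :
  let b := (a + s * d)%N in
  let cb : R := (Num.ceil (((b - 1)%N)%:R / s%:R : R))%:~R in
  let ca : R := (Num.ceil (((a - 1)%N)%:R / s%:R : R))%:~R in
  [series Spow R a d s m * z ^+ m / (m`!)%:R]_m @ \oo -->
    (expR (cb * a%:R * z) - 1) / ((expR (d%:R * z) - 1) * (expR (a%:R * z) - 1))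
  + (expR (ca * b%:R * z) - 1) / ((expR (- (d%:R * z)) - 1) * (expR (b%:R * z) - 1))
  - 1 / (expR z - 1).
Proof.
move=> b cb ca.
have ha0 : (0 < a)%N by lia.
have hs : (0 < s)%N by lia.
pose L := (a * (a + d) + a)%N.
pose r := [seq n <- iota 0 L | ~~ sb a d s n].
have hr : uniq r by rewrite filter_uniq // iota_uniq.
have HS : forall m, Spow R a d s m = \sum_(n <- r) (n%:R : R) ^+ m.
  move=> m; rewrite /Spow.
  have -> : NR a d s = [set` r].
    apply/seteqP; split => n /=; rewrite /NR /= mem_filter mem_iota add0n.
      move=> [hn hrep]; have hsb : ~~ sb a d s n.
        by apply/negP => /(@repP a d s ha0 hs n) .
      rewrite hsb /=; rewrite ltnNge; apply/negP => hL.
      by move/negP: hsb; apply; apply: (@sb_big a d s ha0 hs hcop); lia.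
    move=> /andP [hsb _]; split.
      by rewrite lt0n; apply/negP => /eqP e; move: hsb; rewrite e (@sb0 a d s ha0 hs).
    by move/(@repP a d s ha0 hs n); apply/negP.
  by rewrite -fsbig_seq.
set x := expR z.
have Hser : [series Spow R a d s m * z ^+ m / (m`!)%:R]_m =
    (fun N => \sum_(n <- r) series (exp_coeff (n%:R * z)) N).
  apply/funext => N; rewrite /series /= exchange_big /=; apply: eq_bigr => m _.
  rewrite HS !big_distrl /=; apply: eq_bigr => n _.
  by rewrite exp_coeffE /= exprMn; ring.
rewrite Hser.
suff -> : (expR (cb * a%:R * z) - 1) / ((expR (d%:R * z) - 1) * (expR (a%:R * z) - 1))
  + (expR (ca * b%:R * z) - 1) / ((expR (- (d%:R * z)) - 1) * (expR (b%:R * z) - 1))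
  - 1 / (expR z - 1) = \sum_(n <- r) expR (n%:R * z).
  apply: (@cvg_big _ _ +%R 0 xpredT _ _ _ _ _ _ _).
  - exact: add_continuous.
  - by move=> n _; exact: is_cvg_series_exp_coeff.
rewrite (eq_bigr (fun n => x ^+ n)); last by move=> n _; rewrite expRM_natl.
rewrite /r big_filter.
have -> : iota 0 L = index_iota 0 L by rewrite /index_iota subn0.
have HG := @gaps R a d s ha0 hs hcop x L (leqnn _).
set G := \sum_(0 <= n < L | _) _ in HG *.
set e := x ^+ a in HG *; set f := x ^+ d.
set c := qc s a.-1.
have EW : \sum_(j < a) x ^+ w a d s j = \sum_(j < a) e ^+ qc s j * f ^+ j.
  apply: eq_bigr => j _; rewrite /w exprD [(qc s j * a)%N]mulnC [(j * d)%N]mulnC !exprM //.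
rewrite EW in HG.
have HW := @Wsum R a s ha0 hs e f a.-1; rewrite prednK // in HW.
set g := e * f ^+ s in HW.
have HSg := @geo R g 0 c; rewrite add0n expr0 big_mkord in HSg.
have nat_int : forall k : nat, ((k%:Z)%:~R : R) = k%:R by [].
have Eb : qc s (b - 1) = (d + c)%N.
  rewrite /c /qc /b.
  have -> : (a + s * d - 1 + s.-1 = d * s + (a.-1 + s.-1))%N by rewrite [(s * d)%N]mulnC; lia.
  by rewrite divnMDl.
rewrite /cb /ca !ceil_nat // !nat_int Eb subn1 -/c.
have ex : forall k : nat, expR (k%:R * z) = x ^+ k by move=> k; rewrite expRM_natl.
rewrite -!natrM !ex expRN ex.
have xb : x ^+ b = g by rewrite /b exprD [(s * d)%N]mulnC exprM.
rewrite [(c * b)%N]mulnC [x ^+ (b * c)]exprM xb [((d + c) * a)%N]mulnDl [x ^+ (d * a + c * a)]exprD [x ^+ (d * a)]exprM [(c * a)%N]mulnC [x ^+ (a * c)]exprM -/e -/f.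
rewrite -/x; rewrite -/c in HW.
apply/esym; apply: (@final_alg R x e f g G _ _ _ _ _ _ _ _ _ HG HW HSg).
- by have := @expR_nat_ne1 R z 1 hz isT; rewrite expr1.
- exact: (@expR_nat_ne1 R z a hz ha0).
- exact: (@expR_nat_ne1 R z d hz hd).
- by rewrite -xb; apply: (@expR_nat_ne1 R z b hz); rewrite /b; lia.
- by rewrite /f expf_neq0 // gt_eqF // expR_gt0.
Qed.
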